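(* Let $n\ge2$, $m\ge2$ be integers, let $\mathcal{V}=\mathcal{V}_1\otimes\dots\otimes\mathcal{V}_m$ be a tensor product of vector spaces over a field $\mathbb{F}$, and let $\{x_a : a\in[n]\}$ be a multiset of product tensors with $x_a=x_{a,1}\otimes\dots\otimes x_{a,m}$. For $S\subseteq[n]$ and $j\in[m]$ let $d_j^S=\dim\operatorname{span}\{x_{a,j}:a\in S\}$. If for every subset $S \subseteq [n]$ with $2\leq |S| \leq n$ it holds that $|S| \leq\sum_{j=1}^m (d_j^S-1)$, then the set of product tensors lying in $\operatorname{span}\{x_a : a \in [n]\}$ equals $\mathbb{F}^\times x_1 \sqcup \dots \sqcup \mathbb{F}^\times x_n$ (i.e., every product tensor in this span is a non-zero scalar multiple of some $x_a$).
   Context: $[n]=\{1,\dots,n\}$. A product tensor is a non-zero tensor $z_1\otimes\dots\otimes z_m$, $z_j\in\mathcal{V}_j$. $\mathbb{F}^\times$ denotes the non-zero scalars. *)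

(* Defs.v *)
From HB Require Import structures.
From mathcomp Require Import all_boot all_order all_algebra.
Set Implicit Arguments. Unset Strict Implicit. Unset Printing Implicit Defensive.
Import GRing.Theory.
Local Open Scope ring_scope.

(* The tensor product V_1 (x) ... (x) V_m of V_j = F^(d j) (row vectors)
   is modelled in coordinates: a tensor is a function on multi-indices
   i = (i_1,...,i_m), i_j < d j. *)
Notation multi_index d := {dffun forall j, 'I_(d j)}.

Notation tensor F d := {ffun multi_index d -> F^o}.

Definition ptensor (F : fieldType) (m : nat) (d : 'I_m -> nat)
  (z : forall j : 'I_m, 'rV[F]_(d j)) : tensor F d :=
  [ffun i : multi_index d => (\prod_(j < m) z j 0 (i j) : F^o)].

Definition is_product_tensor (F : fieldType) (m : nat) (d : 'I_m -> nat)
  (t : tensor F d) : Prop :=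
  t != 0 /\ exists z : forall j : 'I_m, 'rV[F]_(d j), t = ptensor z.

Definition in_span (F : fieldType) (m n : nat) (d : 'I_m -> nat)
  (y : 'I_n -> tensor F d) (t : tensor F d) : Prop :=
  exists c : 'I_n -> F, t = \sum_(a < n) c a *: y a.

Definition dimS (F : fieldType) (m n : nat) (d : 'I_m -> nat)
  (x : 'I_n -> forall j : 'I_m, 'rV[F]_(d j)) (S : {set 'I_n}) (j : 'I_m) : nat :=
  \dim <<[seq x a j | a in S]>>%VS.

(* Main.v *)
Require Import Defs.
From HB Require Import structures.
From mathcomp Require Import all_boot all_order all_algebra.
From mathcomp Require Import zify.
From Stdlib Require Import Classical_Prop.
Set Implicit Arguments. Unset Strict Implicit. Unset Printing Implicit Defensive.
Import GRing.Theory.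
Local Open Scope ring_scope.

(* Proof sketch: a circuit of product tensors is a connected
   family; for connected families rank >= sum_j (d_j - 1) + 1 (proved by
   flattening one factor against the others and a Sylvester-type rank
   inequality for sums of block matrices).  *)

Section Rank.
Variable F : fieldType.

Lemma rank2 p q (A B : 'M[F]_(p,q)) :
  (\rank A + \rank B <= \rank (A + B)%R + \rank (A :&: B)%MS + \rank (A^T :&: B^T)%MS)%N.
Proof.
set K := kermx (A + B)%R.
have rK : \rank K = (p - \rank (A + B)%R)%N by rewrite mxrank_ker.
have h1 := mxrank_mul_ker K A.
have s1 : (K *m A <= A :&: B)%MS.
  rewrite sub_capmx submxMl /=.
  idtac.
  have : K *m (A + B) = 0 by apply/sub_kermxP.
  rewrite mulmxDr => /eqP; rewrite addr_eq0 => /eqP ->.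
  by rewrite -scaleN1r scalemx_sub // submxMl.
have s2 : (K :&: kermx A <= kermx (row_mx A B))%MS.
  apply/sub_kermxP; rewrite mul_mx_row.
  have h2 : (K :&: kermx A)%MS *m A = 0 by apply/sub_kermxP; apply: capmxSr.
  have h3 : (K :&: kermx A)%MS *m (A + B) = 0.
    by apply/sub_kermxP; apply: capmxSl.
  move: h3; rewrite mulmxDr h2 add0r => h3.
  idtac.
  by rewrite h3 row_mx0.
have r1 := mxrankS s1. have r2 := mxrankS s2.
rewrite mxrank_ker in r2.
have r3 : \rank (row_mx A B) = (\rank A + \rank B - \rank (A^T :&: B^T)%MS)%N.
  have e : \rank (col_mx A^T B^T) = \rank (A^T + B^T)%MS by rewrite addsmxE.
  rewrite -mxrank_tr tr_row_mx e.
  have := mxrank_sum_cap A^T B^T; rewrite !mxrank_tr; lia.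
have r4 := mxrank_sum_cap A^T B^T. rewrite !mxrank_tr in r4.
have r5 := rank_leq_row (row_mx A B).
have r6 := rank_leq_row (A + B).
lia.
Qed.


Lemma sum_sub_seq (J : eqType) p q (r : seq J) (v : J -> 'M[F]_(p,q)) (W : J -> 'M[F]_q) :
  {in r, forall j, (v j <= W j)%MS} ->
  ((\sum_(j <- r) v j)%R <= (\sum_(j <- r) W j))%MS.
Proof.
elim: r => [|j r IH] H; first by rewrite !big_nil sub0mx.
rewrite !big_cons; apply: addmx_sub_adds; first by apply: H; rewrite mem_head.
by apply: IH => k kr; apply: H; rewrite in_cons kr orbT.
Qed.

Lemma tel (J : eqType) p q (r : seq J) (v : J -> 'M[F]_(p,q)) (U : J -> 'M[F]_p)
  (W : J -> 'M[F]_q) :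
  {in r, forall j, (v j <= W j)%MS /\ ((v j)^T <= U j)%MS} ->
  (\sum_(j <- r) \rank (v j) + \rank (\sum_(j <- r) U j)%MS
     + \rank (\sum_(j <- r) W j)%MS
   <= \rank (\sum_(j <- r) v j)%R + \sum_(j <- r) \rank (U j)
      + \sum_(j <- r) \rank (W j))%N.
Proof.
elim: r => [|j r IH] H; first by rewrite !big_nil !mxrank0.
have H' : {in r, forall j, (v j <= W j)%MS /\ ((v j)^T <= U j)%MS}.
  by move=> k kr; apply: H; rewrite in_cons kr orbT.
have [Hj1 Hj2] := H j (mem_head _ _).
have IH' := IH H'.
rewrite !big_cons.
set S := (\sum_(j <- r) v j)%R.
have SW : (S <= \sum_(j <- r) W j)%MS by apply: sum_sub_seq => k /H' [].
have SU : (S^T <= \sum_(j <- r) U j)%MS.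
  rewrite /S raddf_sum; apply: sum_sub_seq => k /H' [].
  done.
have r2 := rank2 (v j) S.
have c1 := mxrankS (capmxS Hj1 SW).
have c2 : (\rank ((v j)^T :&: (S : 'M[F]_(p,q))^T) <= \rank (U j :&: \sum_(j <- r) U j))%N
  := mxrankS (capmxS Hj2 SU).
have m1 := mxrank_sum_cap (W j) (\sum_(j <- r) W j)%MS.
have m2 := mxrank_sum_cap (U j) (\sum_(j <- r) U j)%MS.
rewrite -/S in IH'.
move: r2 c1 c2 m1 m2 IH'.
set a1 := \rank (v j + S)%R.
set a2 := \rank ((v j)^T :&: _)%MS.
set a3 := \rank (v j :&: S)%MS.
set a4 := \rank S.
set b1 := \rank (W j :&: _)%MS.
set b2 := \rank (U j :&: _)%MS.
set b3 := \rank (W j + _)%MS.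
set b4 := \rank (U j + _)%MS.
set b5 := \rank (\sum_(j0 <- r) W j0)%MS.
set b6 := \rank (\sum_(j0 <- r) U j0)%MS.
set b7 := (\sum_(j0 <- r) \rank (v j0))%N.
set b8 := (\sum_(j0 <- r) \rank (U j0))%N.
set b9 := (\sum_(j0 <- r) \rank (W j0))%N.
lia.
Qed.

End Rank.


Section Fam.
Variables (F : fieldType) (vT : vectType F) (I : finType) (f : I -> vT).

Definition sp (S : {set I}) := <<[seq f a | a in S]>>%VS.
Definition rk S := \dim (sp S).

Lemma mem_sp a (S : {set I}) : a \in S -> f a \in sp S.
Proof. by move=> aS; apply: memv_span; apply: image_f. Qed.

Lemma sp_ind (P : vT -> Prop) (S : {set I}) : P 0 -> (forall x y, P x -> P y -> P (x + y)) ->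
  (forall k x, P x -> P (k *: x)) -> (forall a, a \in S -> P (f a)) ->
  forall v, v \in sp S -> P v.
Proof.
move=> P0 PD PZ Pf v; rewrite /sp => /coord_span ->.
apply: big_ind => // i _; apply: PZ.
have : (image_tuple [eta f] S)`_i \in [seq f a | a in S].
  by rewrite -tnth_nth; apply: mem_tnth.
by case/imageP=> a aS ->; apply: Pf.
Qed.

Lemma sp_subP (S : {set I}) (U : {vspace vT}) : (forall a, a \in S -> f a \in U) -> (sp S <= U)%VS.
Proof. by move=> H; apply/span_subvP => v /imageP [a aS ->]; apply: H. Qed.

Lemma sp_sub (S T : {set I}) : S \subset T -> (sp S <= sp T)%VS.
Proof. by move=> /subsetP ST; apply: sp_subP => a /ST; apply: mem_sp. Qed.

Lemma sp_U (S T : {set I}) : sp (S :|: T) = (sp S + sp T)%VS.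
Proof.
apply/subv_anti/andP; split.
  apply: sp_subP => a; rewrite inE => /orP [aS|aT].
    by apply: subvP (addvSl _ _) _ (mem_sp aS).
  by apply: subvP (addvSr _ _) _ (mem_sp aT).
by rewrite subv_add !sp_sub // ?subsetUl ?subsetUr.
Qed.

Lemma sp_set1 a : sp [set a] = <[f a]>%VS.
Proof.
apply/subv_anti/andP; split.
  by apply: sp_subP => b; rewrite inE => /eqP ->; apply: memv_line.
by rewrite -memvE; apply: mem_sp; rewrite inE.
Qed.

Lemma sp0 : sp set0 = 0%VS.
Proof. by apply/eqP; rewrite -subv0; apply: sp_subP => a; rewrite inE. Qed.

Lemma sp_cover (P : {set {set I}}) : sp (cover P) = (\sum_(B in P) sp B)%VS.
Proof.
apply/subv_anti/andP; split.
  apply: sp_subP => a /bigcupP [B BP aB].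
  by apply: (subvP (sumv_sup B BP (subvv (sp B)))); apply: mem_sp.
by apply/subv_sumP => B BP; apply: sp_sub; apply: bigcup_sup.
Qed.

Lemma rk_sum (P : {set {set I}}) : (rk (cover P) <= \sum_(B in P) rk B)%N.
Proof. rewrite /rk sp_cover; exact: (dimv_sum_leqif _). Qed.

End Fam.

Section Fam2.
Variables (F : fieldType) (vT : vectType F) (I : finType) (f : I -> vT).

Lemma rk_sub (S T : {set I}) : S \subset T -> (rk f S <= rk f T)%N.
Proof. by move=> ST; apply: dimvS; apply: sp_sub. Qed.

Lemma rk_U (S T : {set I}) : (rk f (S :|: T) <= rk f S + rk f T)%N.
Proof. by rewrite /rk sp_U; have := dimv_sum_cap (sp f S) (sp f T); lia. Qed.

Lemma rk_set1 a : rk f [set a] = (f a != 0).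
Proof. by rewrite /rk sp_set1 dim_vline. Qed.

Lemma sp_combP (S : {set I}) v :
  reflect (exists c : I -> F, v = \sum_(a in S) c a *: f a) (v \in sp f S).
Proof.
apply: (iffP idP).
  move=> vS; apply: (@sp_ind _ _ _ f (fun v => exists c : I -> F, v = \sum_(a in S) c a *: f a) S _ _ _ _ v vS).
  - by exists (fun _ => 0); rewrite big1 // => a _; rewrite scale0r.
  - move=> x y [c1 ->] [c2 ->]; exists (fun a => c1 a + c2 a).
    by rewrite -big_split /=; apply: eq_bigr => a _; rewrite scalerDl.
  - move=> k x [c ->]; exists (fun a => k * c a).
    by rewrite scaler_sumr; apply: eq_bigr => a _; rewrite scalerA.
  - move=> a aS; exists (fun b => if b == a then 1 else 0).
    rewrite (bigD1 a) //= eqxx scale1r big1 ?addr0 // => b /andP [_ /negbTE ->].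
    by rewrite scale0r.
move=> [c ->]; apply: memv_suml => a aS; apply: memvZ; exact: mem_sp.
Qed.

Definition splitf (S : {set I}) := exists S1 : {set I},
  [/\ S1 \subset S, S1 != set0, S1 != S & (sp f S1 :&: sp f (S :\: S1) = 0)%VS].
Definition conn (S : {set I}) := S != set0 /\ ~ splitf S.

End Fam2.

Section Lin.
Variables (F : fieldType) (vT wT : vectType F) (I : finType) (f : I -> vT).
Variable g : {linear vT -> wT}.
Hypothesis ginj : injective g.

Lemma sp_lin (S : {set I}) : sp (g \o f) S = (linfun g @: sp f S)%VS.
Proof.
rewrite /sp limg_span; congr (<< _ >>%VS); rewrite -map_comp.
by apply: eq_map => a /=; rewrite lfunE.
Qed.

Lemma rk_lin (S : {set I}) : rk (g \o f) S = rk f S.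
Proof.
rewrite /rk sp_lin limg_dim_eq //.
have /eqP -> : lker (linfun g) == 0%VS.
  by apply/lker0P => x y; rewrite !lfunE; apply: ginj.
by rewrite capv0.
Qed.


Lemma cap0_lin (A B : {vspace vT}) :
  ((linfun g @: A) :&: (linfun g @: B) == 0)%VS = (A :&: B == 0)%VS.
Proof.
rewrite -!subv0; apply/subvP/subvP => H y.
  move=> /memv_capP [yA yB]; rewrite memv0.
  have : g y \in (0 : {vspace wT})%VS.
    by apply: H; apply/memv_capP; split; rewrite -lfunE; apply: memv_img.
  by rewrite memv0 -(linear0 g) => /eqP /ginj ->.
move=> /memv_capP [/memv_imgP [a aA ->] /memv_imgP [b bB]].
rewrite !lfunE /= => /ginj eab.
have : a \in (0 : {vspace vT})%VS by apply: H; apply/memv_capP; split => //; rewrite eab.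
by rewrite !memv0 => /eqP ->; rewrite linear0.
Qed.

Lemma split_lin (S : {set I}) : splitf (g \o f) S <-> splitf f S.
Proof.
split => [] [S1 [h1 h2 h3 h4]]; exists S1; split => //.
  by apply/eqP; rewrite -cap0_lin -!sp_lin h4.
by rewrite !sp_lin; apply/eqP; rewrite cap0_lin h4.
Qed.

Lemma conn_lin (S : {set I}) : conn (g \o f) S <-> conn f S.
Proof. by rewrite /conn split_lin. Qed.

End Lin.

Lemma sp_ext (F : fieldType) (vT : vectType F) (I : finType) (f1 f2 : I -> vT) (S : {set I}) :
  f1 =1 f2 -> sp f1 S = sp f2 S.
Proof. by move=> e; rewrite /sp; congr (<< _ >>%VS); apply: eq_map. Qed.

Lemma rk_ext (F : fieldType) (vT : vectType F) (I : finType) (f1 f2 : I -> vT) (S : {set I}) :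
  f1 =1 f2 -> rk f1 S = rk f2 S.
Proof. by move=> e; rewrite /rk (sp_ext S e). Qed.

Lemma conn_ext (F : fieldType) (vT : vectType F) (I : finType) (f1 f2 : I -> vT) (S : {set I}) :
  f1 =1 f2 -> conn f1 S -> conn f2 S.
Proof.
move=> e [h1 h2]; split => // [[S1 [k1 k2 k3 k4]]]; apply: h2; exists S1; split => //.
by rewrite !(sp_ext _ e).
Qed.



Section P2.
Variables (F : fieldType) (I : finType) (p q : nat) (u : I -> 'rV[F]_p) (w : I -> 'rV[F]_q).
Hypotheses (unz : forall a, u a != 0) (wnz : forall a, w a != 0).

Definition Mf a : 'M[F]_(p,q) := (u a)^T *m w a.
Definition Us (S : {set I}) : 'M[F]_p := (\sum_(a in S) <<u a>>)%MS.
Definition Ws (S : {set I}) : 'M[F]_q := (\sum_(a in S) <<w a>>)%MS.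

Lemma rV_nz n (v : 'rV[F]_n) : v != 0 -> exists k, v 0 k != 0.
Proof.
move=> vnz; case: (pickP (fun k => v 0 k != 0)) => [k Hk|H]; first by exists k.
case/eqP: vnz; apply/rowP => k; rewrite mxE.
by move/negbFE: (H k) => /eqP.
Qed.

Lemma Mf_nz a : Mf a != 0.
Proof.
have [k uk] := rV_nz (unz a); have [l wl] := rV_nz (wnz a).
apply/eqP => /matrixP /(_ k l); rewrite !mxE big_ord1 !mxE => /eqP.
by rewrite mulf_eq0 (negbTE uk) (negbTE wl).
Qed.

Lemma rank_Mf a : (\rank (Mf a) <= 1)%N.
Proof. exact: leq_trans (mxrankM_maxr _ _) (rank_leq_row _). Qed.

Lemma Mf_sub B v : v \in sp Mf B -> (v <= Ws B)%MS /\ (v^T <= Us B)%MS.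
Proof.
apply: (@sp_ind _ _ _ Mf (fun v => (v <= Ws B)%MS /\ (v^T <= Us B)%MS)).
- by rewrite trmx0 !sub0mx.
- move=> x y [x1 x2] [y1 y2]; rewrite linearD /=; split; exact: addmx_sub.
- move=> k x [x1 x2]; rewrite linearZ /=; split; exact: scalemx_sub.
- move=> a aB; rewrite /Mf trmx_mul trmxK; split.
    apply: submx_trans (submxMl _ _) _; rewrite -(genmxE (w a)).
    exact: (sumsmx_sup a aB (submx_refl _)).
  apply: submx_trans (submxMl _ _) _; rewrite -(genmxE (u a)).
  exact: (sumsmx_sup a aB (submx_refl _)).
Qed.

Lemma u_sub_of_M a m (X : 'M[F]_(m,p)) : ((Mf a)^T <= X)%MS -> (u a <= X)%MS.
Proof.
have [k wk] := rV_nz (wnz a).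
rewrite /Mf trmx_mul trmxK => H.
have Hk : (row k ((w a)^T *m u a) <= X)%MS := submx_trans (row_sub _ _) H.
have -> : u a = (w a 0 k)^-1 *: row k ((w a)^T *m u a).
  by apply/rowP => l; rewrite !mxE big_ord1 !mxE mulrA mulVf ?mul1r.
exact: scalemx_sub.
Qed.


Lemma w_sub_of_M a m (X : 'M[F]_(m,q)) : (Mf a <= X)%MS -> (w a <= X)%MS.
Proof.
have [k uk] := rV_nz (unz a).
rewrite /Mf => H.
have Hk : (row k ((u a)^T *m w a) <= X)%MS := submx_trans (row_sub _ _) H.
have -> : w a = (u a 0 k)^-1 *: row k ((u a)^T *m w a).
  by apply/rowP => l; rewrite !mxE big_ord1 !mxE mulrA mulVf ?mul1r.
exact: scalemx_sub.
Qed.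

Definition PP (P : {set {set I}}) (S : {set I}) := (cover P == S) && (set0 \notin P).

Lemma cover_U (P1 P2 : {set {set I}}) : cover (P1 :|: P2) = cover P1 :|: cover P2.
Proof.
apply/setP => a; rewrite inE; apply/bigcupP/orP.
  by case=> B; rewrite inE => /orP [] BP aB; [left|right]; apply/bigcupP; exists B.
by case=> /bigcupP [B BP aB]; exists B => //; rewrite inE BP ?orbT.
Qed.

Lemma P2_0 : exists P : {set {set I}},
  [/\ PP P set0, rk Mf set0 = (\sum_(B in P) rk Mf B)%N &
      forall B, B \in P -> (\rank (Us B) + \rank (Ws B) <= rk Mf B + 1)%N].
Proof.
exists set0; split.
- by rewrite /PP /cover big_set0 eqxx in_set0.
- by rewrite big_set0 /rk sp0 dimv0.
- by move=> B; rewrite inE.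
Qed.

End P2.

Section DimLine.
Variables (F : fieldType) (vT : vectType F).
Lemma dim_add_line (x : vT) (U : {vspace vT}) : x \notin U -> \dim (<[x]> + U) = (\dim U).+1.
Proof.
move=> xU; have x0 : x != 0 by apply: contraNneq xU => ->; apply: mem0v.
have := dimv_sum_cap <[x]> U; rewrite dim_vline x0.
suff -> : \dim (<[x]> :&: U) = 0%N by lia.
apply/eqP; rewrite dimv_eq0 -subv0; apply/subvP => y /memv_capP [/vlineP [k ->] yU].
case: (eqVneq k 0) => [->|k0]; first by rewrite scale0r mem0v.
by case/negP: xU; rewrite -[x](scalerK k0); apply: memvZ.
Qed.
End DimLine.


Section P2b.
Variables (F : fieldType) (I : finType) (p q : nat) (u : I -> 'rV[F]_p) (w : I -> 'rV[F]_q).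
Hypotheses (unz : forall a, u a != 0) (wnz : forall a, w a != 0).
Local Notation M := (Mf u w).
Local Notation U := (Us u).
Local Notation W := (Ws w).

Lemma P2 n (S : {set I}) : (#|S| <= n)%N -> exists P : {set {set I}},
  [/\ PP P S, rk M S = (\sum_(B in P) rk M B)%N &
      forall B, B \in P -> (\rank (U B) + \rank (W B) <= rk M B + 1)%N].
Proof.
elim: n S => [|n IH] S.
  by rewrite leqn0 cards_eq0 => /eqP ->; apply: P2_0.
move=> Sn.
case: (set_0Vmem S) => [->|[e eS]]; first by apply: P2_0.
set S' := S :\ e.
have S'n : (#|S'| <= n)%N by move: Sn; rewrite (cardsD1 e S) eS.
have [P' [/andP [/eqP cP' nP'] rS' bP']] := IH S' S'n.
have Se : S = [set e] :|: S' by rewrite setD1K.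
have eS' : e \notin S' by rewrite !inE eqxx.
have ePB : forall B, B \in P' -> e \notin B.
  by move=> B BP; apply: contra eS' => eB; rewrite -cP'; apply/bigcupP; exists B.
have spS : sp M S = (<[M e]> + sp M S')%VS by rewrite Se sp_U sp_set1.
case: (boolP (M e \in sp M S')) => He; last first.
  have eP' : [set e] \notin P' by apply/negP => /ePB; rewrite inE eqxx.
  exists ([set e] |: P'); split.
  - rewrite /PP cover_U cover1 cP' -Se eqxx /= !inE negb_or nP' andbT.
    by apply/eqP => /setP /(_ e); rewrite !inE eqxx.
  - rewrite big_setU1 //= -rS' /rk spS dim_add_line // sp_set1 dim_vline.
    by rewrite (Mf_nz unz wnz).
  - move=> B; rewrite !inE => /orP [/eqP ->|BP]; last exact: bP'.
    rewrite /Us /Ws !big_set1 !mxrank_gen !rank_rV unz wnz.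
    by rewrite /rk sp_set1 dim_vline (Mf_nz unz wnz).
rewrite -cP' sp_cover in He.
have [v vB eqv] := memv_sumP He.
set Z := [set B | v B != 0].
set Q := P' :&: Z.
set R := P' :\: Z.
set N := [set e] :|: cover Q.
have QP : Q \subset P' by apply: subsetIl.
have RP : R \subset P' by apply: subsetDl.
have f1 : M e = (\sum_(B in Q) v B)%R.
  rewrite eqv (big_setID Z) /= [X in (_ + X)%R]big1 ?addr0 // => B.
  by rewrite !inE negbK => /andP [/eqP -> _].
have f2 : cover P' = cover Q :|: cover R by rewrite -cover_U setID.
have sQ : M e \in sp M (cover Q).
  rewrite sp_cover f1; apply: memv_sumr => B BQ; apply: vB.
  by apply: (subsetP QP).
have spN : sp M N = sp M (cover Q) by rewrite sp_U sp_set1; apply/addv_idPr; rewrite -memvE.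
have rP' : rk M S' = (\sum_(B in Q) rk M B + \sum_(B in R) rk M B)%N.
  by rewrite rS' (big_setID Z).
have rN : rk M N = (\sum_(B in Q) rk M B)%N.
  apply/eqP; rewrite eqn_leq /rk spN; apply/andP; split; first exact: rk_sum.
  have h1 := rk_U M (cover Q) (cover R).
  have h2 := rk_sum M R.
  rewrite -f2 cP' in h1; rewrite /rk in h1 h2 rP'; lia.
have eNR : N \notin R.
  by apply/negP => /(subsetP RP) /ePB; rewrite !inE eqxx.
exists (N |: R); split.
- rewrite /PP cover_U cover1 /N -setUA -f2 cP' -Se eqxx /=.
  rewrite !inE negb_or; apply/andP; split.
    by apply/eqP => /setP /(_ e); rewrite !inE eqxx.
  by apply: contra nP' => /andP [_ ->].
- rewrite big_setU1 //= rN.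
  have -> : rk M S = rk M S' by rewrite /rk spS; congr (\dim _); apply/addv_idPr; rewrite -memvE -cP' sp_cover.
  by rewrite rP'.
move=> B; rewrite !inE => /orP [/eqP ->|/andP [_ BP]]; last exact: bP'.
have T := @tel F {set I} p q (enum Q) v U W.
have hT : {in enum Q, forall j, (v j <= W j)%MS /\ ((v j)^T <= U j)%MS}.
  move=> C; rewrite mem_enum => CQ; apply: Mf_sub; apply: vB.
  exact: (subsetP QP).
move: (T hT); rewrite !big_enum /= -f1 => {}T.
have r1 := rank_Mf u w e.
have r2 : (#|Q| <= \sum_(B in Q) \rank (v B))%N.
  rewrite -sum1_card; apply: leq_sum => C; rewrite !inE => /andP [_ vB0].
  by rewrite lt0n mxrank_eq0.
have r3 : (\sum_(B in Q) \rank (U B) + \sum_(B in Q) \rank (W B)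
            <= \sum_(B in Q) rk M B + #|Q|)%N.
  rewrite -big_split -sum1_card -big_split /=; apply: leq_sum => C CQ.
  by apply: bP'; apply: (subsetP QP).
have r4 : (\rank (U N) <= \rank (\sum_(B in Q) U B)%MS)%N.
  apply: mxrankS; apply/sumsmx_subP => a; rewrite inE => /orP [].
    rewrite inE => /eqP ->; rewrite genmxE; apply: (u_sub_of_M wnz).
    rewrite f1 raddf_sum /=; apply: summx_sub_sums => C CQ.
    by have [] := Mf_sub (vB C (subsetP QP C CQ)).
  move=> /bigcupP [C CQ aC]; apply: (sumsmx_sup C CQ).
  by apply: (sumsmx_sup a aC); apply: submx_refl.
have r5 : (\rank (W N) <= \rank (\sum_(B in Q) W B)%MS)%N.
  apply: mxrankS; apply/sumsmx_subP => a; rewrite inE => /orP [].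
    rewrite inE => /eqP ->; rewrite genmxE; apply: (w_sub_of_M unz).
    rewrite f1; apply: summx_sub_sums => C CQ.
    by have [] := Mf_sub (vB C (subsetP QP C CQ)).
  move=> /bigcupP [C CQ aC]; apply: (sumsmx_sup C CQ).
  by apply: (sumsmx_sup a aC); apply: submx_refl.
rewrite rN.
move: T r1 r2 r3 r4 r5.
set x1 := \rank (M e). set x2 := \rank (U N). set x3 := \rank (W N).
set x4 := \rank (\sum_(B in Q) U B)%MS. set x5 := \rank (\sum_(B in Q) W B)%MS.
set x6 := (\sum_(B in Q) \rank (v B))%N.
set x7 := (\sum_(B in Q) \rank (U B))%N. set x8 := (\sum_(B in Q) \rank (W B))%N.
set x9 := (\sum_(B in Q) rk M B)%N.
lia.
Qed.

End P2b.


Section B1.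
Variables (F : fieldType) (I : finType) (p : nat) (u : I -> 'rV[F]_p).

Lemma mem_sp_rV (S : {set I}) v : (v \in sp u S) = (v <= Us u S)%MS.
Proof.
apply/idP/idP.
  apply: (@sp_ind _ _ _ u (fun v => (v <= Us u S)%MS)).
  - exact: sub0mx.
  - by move=> x y; apply: addmx_sub.
  - by move=> k x; apply: scalemx_sub.
  - by move=> a aS; rewrite -(genmxE (u a)); apply: (sumsmx_sup a aS); apply: submx_refl.
move/sub_sumsmxP => [D ->]; apply: memv_suml => a aS.
have : (D a *m <<u a>>%MS <= u a)%MS by rewrite -(genmxE (u a)) submxMl.
by case/sub_rVP => k ->; apply: memvZ; apply: mem_sp.
Qed.

Lemma rank_add_rV m (v : 'rV[F]_p) (X : 'M[F]_(m,p)) :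
  \rank (<<v>> + X)%MS = (\rank X + ~~ (v <= X)%MS)%N.
Proof.
have h := mxrank_sum_cap <<v>>%MS X.
case: (boolP (v <= X)%MS) => vX /=.
  have e : (<<v>> :&: X :=: <<v>>)%MS.
    by apply/eqmxP; rewrite capmxSl sub_capmx submx_refl genmxE vX.
  by rewrite e in h; lia.
have v0 : v != 0 by apply: contraNneq vX => ->; apply: sub0mx.
have c0 : \rank (<<v>> :&: X)%MS = 0%N.
  have c1 : (\rank (<<v>> :&: X)%MS <= 1)%N.
    by apply: leq_trans (mxrankS (capmxSl _ _)) _; rewrite mxrank_gen rank_rV; case: (v != 0).
  case: (ltngtP (\rank (<<v>> :&: X)%MS) 1) c1 => // c2 _; first by lia.
  have [_ E] := mxrank_leqif_eq (capmxSl <<v>>%MS X).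
  have : (<<v>> :&: X == <<v>>)%MS by rewrite -E mxrank_gen rank_rV v0 c2.
  case/andP => _; rewrite sub_capmx genmxE => /andP [_].
  by rewrite genmxE (negbTE vX).
by rewrite c0 mxrank_gen rank_rV v0 in h; lia.
Qed.

Lemma rk_rV_ind n (S : {set I}) : (#|S| <= n)%N -> rk u S = \rank (Us u S).
Proof.
elim: n S => [|n IH] S.
  rewrite leqn0 cards_eq0 => /eqP ->.
  by rewrite /rk sp0 dimv0 /Us big_set0 mxrank0.
move=> Sn; case: (set_0Vmem S) => [->|[e eS]].
  by rewrite /rk sp0 dimv0 /Us big_set0 mxrank0.
have S'n : (#|S :\ e| <= n)%N by move: Sn; rewrite (cardsD1 e S) eS.
have Se : S = [set e] :|: (S :\ e) by rewrite setD1K.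
have -> : Us u S = (<<u e>> + Us u (S :\ e))%MS by rewrite /Us (big_setD1 e eS).
rewrite rank_add_rV -IH // -mem_sp_rV /rk.
have -> : sp u S = (<[u e]> + sp u (S :\ e))%VS by rewrite {1}Se sp_U sp_set1.
case: (boolP (u e \in sp u (S :\ e))) => H /=.
  by rewrite addn0; congr (\dim _); apply/addv_idPr; rewrite -memvE.
by rewrite dim_add_line // addn1.
Qed.

Lemma rk_rV (S : {set I}) : rk u S = \rank (Us u S).
Proof. exact: rk_rV_ind (leqnn _). Qed.

End B1.

Section J2.
Variables (F : fieldType) (I : finType) (p q : nat) (u : I -> 'rV[F]_p) (w : I -> 'rV[F]_q).
Hypotheses (unz : forall a, u a != 0) (wnz : forall a, w a != 0).

Lemma J2 (S : {set I}) : conn (Mf u w) S -> (rk u S + rk w S <= rk (Mf u w) S + 1)%N.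
Proof.
move=> [Snz Sns]; rewrite !rk_rV.
have [P [/andP [/eqP cP nP] rS bP]] := P2 unz wnz (leqnn #|S|).
have [a aS] := set0Pn _ Snz.
have : a \in cover P by rewrite cP.
case/bigcupP => B BP aB.
case: (eqVneq B S) => [<-|BS]; first exact: bP.
exfalso; apply: Sns; exists B; split => //.
- by rewrite -cP; apply: bigcup_sup.
- by apply: contraNneq nP => <-.
have BsS : B \subset S by rewrite -cP; apply: bigcup_sup.
have SU : S = B :|: (S :\: B).
  apply/setP => x; rewrite !inE; case xB: (x \in B) => //=.
  by move/subsetP: BsS => /(_ x xB) ->.
have sub1 : S :\: B \subset cover (P :\ B).
  apply/subsetP => x; rewrite !inE => /andP [xB xS].
  move: xS; rewrite -cP => /bigcupP [C CP xC]; apply/bigcupP; exists C => //.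
  by rewrite !inE CP andbT; apply: contraNneq xB => <-.
have h1 := rk_sub (Mf u w) sub1.
have h2 := rk_sum (Mf u w) (P :\ B).
have h3 : rk (Mf u w) S = (rk (Mf u w) B + \sum_(C in P :\ B) rk (Mf u w) C)%N.
  by rewrite rS (big_setD1 B BP).
have h4 := dimv_sum_cap (sp (Mf u w) B) (sp (Mf u w) (S :\: B)).
rewrite -sp_U -SU in h4.
apply/eqP; rewrite -dimv_eq0; apply/eqP.
rewrite /rk in h1 h2 h3; lia.
Qed.

End J2.

Section SplitM.
Variables (F : fieldType) (I : finType) (p q : nat) (u : I -> 'rV[F]_p) (w : I -> 'rV[F]_q).

Lemma col_in (T : {set I}) t : t \in sp (Mf u w) T -> forall k, (col k t)^T \in sp u T.
Proof.
apply: (@sp_ind _ _ _ (Mf u w) (fun t => forall k, (col k t)^T \in sp u T) T).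
- move=> k; rewrite (_ : (col k 0)^T = 0) ?mem0v //.
  by apply/rowP => r; rewrite !mxE.
- move=> x y Hx Hy k.
  have -> : (col k (x + y))^T = (col k x)^T + (col k y)^T by apply/rowP=> r; rewrite !mxE.
  by apply: memvD.
- move=> c x Hx k; have -> : (col k (c *: x))^T = c *: (col k x)^T.
    by apply/rowP=> r; rewrite !mxE.
  by apply: memvZ.
- move=> a aT k; have -> : (col k (Mf u w a))^T = w a 0 k *: u a.
    by apply/rowP => r; rewrite !mxE big_ord1 !mxE mulrC.
  by apply: memvZ; apply: mem_sp.
Qed.

Lemma split_M (S : {set I}) : splitf u S -> splitf (Mf u w) S.
Proof.
case=> S1 [h1 h2 h3 h4]; exists S1; split => //.
apply/eqP; rewrite -subv0; apply/subvP => t /memv_capP [t1 t2]; rewrite memv0.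
apply/eqP/matrixP => r k.
have : (col k t)^T \in (sp u S1 :&: sp u (S :\: S1))%VS.
  by apply/memv_capP; split; apply: col_in.
by rewrite h4 memv0 => /eqP /rowP /(_ r); rewrite !mxE.
Qed.

End SplitM.


Section Tensor.
Variables (F : fieldType) (m : nat) (d : 'I_m -> nat).
Local Notation mi := (multi_index d).
Local Notation tens := (tensor F d).
Local Notation N := #|{: mi}|.

Definition vecT (t : tens) : 'rV[F]_N := \row_(r < N) (t (enum_val r) : F).

Fact vecT_is_linear : linear vecT.
Proof. by move=> a x y; apply/rowP => r; rewrite !mxE !ffunE. Qed.
HB.instance Definition _ := GRing.isLinear.Build F tens 'rV[F]_N _ vecT vecT_is_linear.

Lemma vecT_inj : injective vecT.
Proof.
move=> t t' /rowP e; apply/ffunP => i.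
by have := e (enum_rank i); rewrite !mxE enum_rankK.
Qed.

Definition upd (i : mi) (j : 'I_m) (k : nat) : mi :=
  [ffun l => insubd (i l) (if l == j then k else val (i l))].

Lemma upd_val i j k l : (k < d j)%N -> val (upd i j k l) = if l == j then k else val (i l).
Proof.
move=> kd; rewrite ffunE; case: (eqVneq l j) => [->|lj]; first by rewrite insubdK.
by rewrite valKd.
Qed.

Definition Phi (j : 'I_m) (t : tens) : 'M[F]_(N, d j) :=
  \matrix_(r, k) (if val ((enum_val r : mi) j) == 0%N then (t (upd (enum_val r) j k) : F) else 0).

Fact Phi_is_linear j : linear (Phi j).
Proof.
move=> a x y; apply/matrixP => r k; rewrite !mxE !ffunE.
by case: ifP => _ //; rewrite mulr0 addr0.
Qed.
HB.instance Definition _ j := GRing.isLinear.Build F tens 'M[F]_(N, d j) _ (Phi j) (Phi_is_linear j).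

Lemma Phi_inj j : (0 < d j)%N -> injective (Phi j).
Proof.
move=> dj t t' e; apply/ffunP => i0.
pose i := upd i0 j 0.
have ij : val (i j) = 0%N by rewrite upd_val // eqxx.
have := congr1 (fun M : 'M[F]_(N, d j) => M (enum_rank i) (i0 j)) e; rewrite !mxE enum_rankK ij eqxx.
have -> : upd i j (i0 j) = i0.
  apply/ffunP => l; apply: val_inj; rewrite upd_val //.
  case: (eqVneq l j) => [->//|lj]; by rewrite /i upd_val // (negbTE lj).
by [].
Qed.


Definition e0 n : 'rV[F]_n := \row_(k < n) (if val k == 0%N then 1 else 0).
Definition xe (j : 'I_m) (z : forall l, 'rV[F]_(d l)) : forall l, 'rV[F]_(d l) :=
  fun l => if l == j then e0 (d l) else z l.

Lemma Phi_pt j z : Phi j (ptensor z) = (vecT (ptensor (xe j z)))^T *m z j.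
Proof.
apply/matrixP => r k; rewrite !mxE big_ord1 !mxE !ffunE.
set i : mi := enum_val r.
have E1 : \prod_(l < m) (xe j z l) 0 (i l)
    = (if val (i j) == 0%N then 1 else 0) * \prod_(l < m | l != j) z l 0 (i l).
  rewrite (bigD1 j) //= {1}/xe eqxx mxE; congr (_ * _).
  by apply: eq_bigr => l lj; rewrite /xe (negbTE lj).
have E2 : \prod_(l < m) z l 0 (upd i j k l) = z j 0 k * \prod_(l < m | l != j) z l 0 (i l).
  rewrite (bigD1 j) //=; congr (_ * _).
    by congr (z j 0 _); apply: val_inj; rewrite upd_val ?eqxx.
  apply: eq_bigr => l lj; congr (z l 0 _); apply: val_inj.
  by rewrite upd_val ?(negbTE lj).
rewrite E1 E2; case: ifP => _; first by rewrite mul1r mulrC.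
by rewrite !mul0r.
Qed.


Lemma ptensor_nz (z : forall l, 'rV[F]_(d l)) : (forall l, z l != 0) -> ptensor z != 0.
Proof.
move=> znz.
have [f Hf] : exists f : forall l, 'I_(d l), forall l, z l 0 (f l) != 0.
  by apply: (@fin_all_exists _ (fun l => 'I_(d l)) (fun l k => z l 0 k != 0)) => l; apply: rV_nz.
apply/eqP => /ffunP /(_ [ffun l => f l]); rewrite !ffunE => /eqP.
case/prodf_eq0 => l _; rewrite ffunE => /eqP H.
by move: (Hf l); rewrite H eqxx.
Qed.

Lemma ptensor_nz_inv (z : forall l, 'rV[F]_(d l)) : ptensor z != 0 -> forall l, z l != 0.
Proof.
move=> pnz l; apply: contraNneq pnz => zl; apply/eqP/ffunP => i.
rewrite !ffunE (bigD1 l) //= zl mxE mul0r.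
by [].
Qed.

Lemma ptensor_scale (c : 'I_m -> F) (z : forall l, 'rV[F]_(d l)) :
  ptensor (fun l => c l *: z l) = (\prod_l c l) *: ptensor z.
Proof.
apply/ffunP => i; rewrite !ffunE.
rewrite (eq_bigr (fun l => c l * z l 0 (i l))); last by move=> l _; rewrite mxE.
by rewrite big_split.
Qed.

Lemma e0_nz n : (0 < n)%N -> e0 n != 0.
Proof.
move=> n0; apply/eqP => /rowP /(_ (Ordinal n0)); rewrite !mxE /=.
by move/eqP; rewrite oner_eq0.
Qed.

Lemma vecT_nz (t : tens) : t != 0 -> vecT t != 0.
Proof.
move=> tnz; apply/eqP => e; move/eqP: tnz; apply.
by apply: vecT_inj; rewrite e linear0.
Qed.

End Tensor.


Lemma rk_const (F : fieldType) (vT : vectType F) (I : finType) (c : vT) (S : {set I}) :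
  c != 0 -> S != set0 -> rk (fun _ => c) S = 1%N.
Proof.
move=> c0 /set0Pn [a aS]; rewrite /rk.
have -> : sp (fun _ => c) S = <[c]>%VS.
  apply/subv_anti/andP; split.
    by apply: sp_subP => b _; apply: memv_line.
  by rewrite -memvE; apply: (@mem_sp _ _ _ (fun _ => c) a).
by rewrite dim_vline c0.
Qed.

Lemma rk_ge1 (F : fieldType) (vT : vectType F) (I : finType) (f : I -> vT) (S : {set I}) a :
  a \in S -> f a != 0 -> (1 <= rk f S)%N.
Proof.
move=> aS fa; have h : [set a] \subset S by rewrite sub1set.
by have := rk_sub f h; rewrite rk_set1 fa.
Qed.

Section Jc.
Variables (F : fieldType) (m : nat) (d : 'I_m -> nat).

Lemma rk_le_d (I : finType) (x : I -> forall j : 'I_m, 'rV[F]_(d j)) S j :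
  (rk (fun a => x a j) S <= d j)%N.
Proof. by rewrite rk_rV; apply: rank_leq_col. Qed.

Lemma Jc (I : finType) n (x : I -> forall j : 'I_m, 'rV[F]_(d j)) (S : {set I}) :
  (\sum_(j < m) (rk (fun a => x a j) S - 1) <= n)%N ->
  (forall a j, x a j != 0) -> conn (fun a => ptensor (x a)) S ->
  (\sum_(j < m) (rk (fun a => x a j) S - 1) + 1 <= rk (fun a => ptensor (x a)) S)%N.
Proof.
elim: n x => [|n IH] x hn xnz hc.
  have -> : (\sum_(j < m) (rk (fun a => x a j) S - 1) = 0)%N by lia.
  have [a aS] := set0Pn _ hc.1.
  by apply: (rk_ge1 aS); apply: ptensor_nz.
case: (boolP [exists j, (1 < rk (fun a => x a j) S)%N]); last first.
  rewrite negb_exists => /forallP hall.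
  rewrite big1; last by move=> j _; move: (hall j); rewrite -leqNgt; lia.
  have [a aS] := set0Pn _ hc.1.
  by apply: (rk_ge1 aS); apply: ptensor_nz.
case/existsP => j hj.
have dj : (0 < d j)%N by have := rk_le_d x S j; lia.
set x' := fun a => xe j (x a).
have x'nz : forall a l, x' a l != 0.
  move=> a l; rewrite /x' /xe; case: (eqVneq l j) => [->|lj].
    by rewrite ?eqxx; apply: e0_nz.
  by rewrite ?(negbTE lj); apply: xnz.
have rj' : rk (fun a => x' a j) S = 1%N.
  have -> : rk (fun a => x' a j) S = rk (fun _ => e0 F (d j)) S.
    by apply: rk_ext => a; rewrite /x' /xe eqxx.
  by rewrite rk_const //; [apply: e0_nz | exact: hc.1].
have rl' : forall l, l != j -> rk (fun a => x' a l) S = rk (fun a => x a l) S.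
  by move=> l lj; apply: rk_ext => a; rewrite /x' /xe (negbTE lj).
have hs : (\sum_(l < m) (rk (fun a => x' a l) S - 1) + (rk (fun a => x a j) S - 1)
    = \sum_(l < m) (rk (fun a => x a l) S - 1))%N.
  rewrite [in RHS](bigD1 j) //= (bigD1 j) //= rj' subnn add0n addnC; congr (_ + _).
  by apply: eq_bigr => l lj; rewrite rl'.
set u := fun a => vecT (ptensor (x' a)).
set w := fun a => x a j.
have unz : forall a, u a != 0.
  by move=> a; apply: vecT_nz; apply: ptensor_nz; apply: x'nz.
have wnz : forall a, w a != 0 by move=> a; apply: xnz.
have eM : Mf u w =1 Phi j \o (fun a => ptensor (x a)).
  by move=> a; rewrite /Mf /= Phi_pt.
have cPhi : conn (Phi j \o (fun a => ptensor (x a))) S.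
  by apply/(conn_lin _ (Phi_inj dj)).
have cM : conn (Mf u w) S.
  by apply: (conn_ext _ cPhi) => a; rewrite eM.
have c' : conn (fun a => ptensor (x' a)) S.
  split; first exact: hc.1.
  move=> sp'; have su : splitf u S by apply/(split_lin _ (@vecT_inj F m d)).
  by apply: cM.2; apply: split_M.
have IH' := IH x'.
have J := J2 unz wnz cM.
have e1 : rk u S = rk (fun a => ptensor (x' a)) S.
  exact: (rk_lin _ (@vecT_inj F m d)).
have e2 : rk (Mf u w) S = rk (fun a => ptensor (x a)) S.
  by rewrite (rk_ext _ eM) (rk_lin _ (Phi_inj dj)).
have IH'' := IH' ltac:(lia) x'nz c'.
rewrite e1 e2 in J.
rewrite /w in J.
lia.
Qed.
End Jc.


Section CC.
Variables (F : fieldType) (m : nat) (d : 'I_m -> nat).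
Variables (I : finType) (x : I -> forall j : 'I_m, 'rV[F]_(d j)).
Hypothesis xnz : forall a j, x a j != 0.
Local Notation f := (fun a => ptensor (x a)).

Definition dep (C : {set I}) := exists c : I -> F,
  [/\ forall a, a \in C -> c a != 0, \sum_(a in C) c a *: f a = 0 & C != set0].

Lemma rk_dep C : dep C -> (rk f C < #|C|)%N.
Proof.
case=> c [cnz csum /set0Pn [e eC]].
have fe : f e \in sp f (C :\ e).
  have : c e *: f e = - \sum_(a in C :\ e) c a *: f a.
    by apply/eqP; rewrite -addr_eq0 -(big_setD1 e eC) /= csum.
  move/(congr1 (fun v => (c e)^-1 *: v)); rewrite scalerA mulVf ?cnz // scale1r => ->.
  apply: memvZ; rewrite rpredN; apply: memv_suml => a aC; apply: memvZ; exact: mem_sp.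
have : rk f C = rk f (C :\ e).
  rewrite /rk -{1}(setD1K eC) sp_U sp_set1; congr (\dim _).
  by apply/addv_idPr; rewrite -memvE.
move=> ->; rewrite /rk /sp; apply: leq_ltn_trans (dim_span _) _.
rewrite size_image (cardsD1 e C) eC; lia.
Qed.

Lemma CC_ind n (C : {set I}) : (#|C| <= n)%N -> dep C ->
  exists S : {set I}, S \subset C /\
    (\sum_(j < m) (rk (fun a => x a j) S - 1) + 2 <= #|S|)%N.
Proof.
elim: n C => [|n IH] C.
  by rewrite leqn0 cards_eq0 => /eqP -> [c [_ _]]; rewrite eqxx.
move=> Cn dC.
have [c [cnz csum Cnz]] := dC.
case: (classic (splitf f C)) => [[C1 [h1 h2 h3 h4]]|ns].
  have dC1 : dep C1.
    exists c; split => //; first by move=> a aC1; apply: cnz; apply: (subsetP h1).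
    have s1 : \sum_(a in C1) c a *: f a \in sp f C1.
      by apply: memv_suml => a aC1; apply: memvZ; exact: mem_sp.
    have s2 : \sum_(a in C1) c a *: f a \in sp f (C :\: C1).
      have : \sum_(a in C1) c a *: f a = - \sum_(a in C :\: C1) c a *: f a.
        apply/eqP; rewrite -addr_eq0; apply/eqP.
        by rewrite -[RHS]csum [in RHS](big_setID C1) /= (setIidPr h1).
      move=> ->; rewrite rpredN; apply: memv_suml => a aC; apply: memvZ; exact: mem_sp.
    have : \sum_(a in C1) c a *: f a \in (sp f C1 :&: sp f (C :\: C1))%VS.
      by apply/memv_capP.
    by rewrite h4 memv0 => /eqP.
  have C1n : (#|C1| <= n)%N.
    have : C1 \proper C by rewrite properEneq h3 h1.
    move/proper_card; lia.
  have [S [SC1 HS]] := IH C1 C1n dC1.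
  by exists S; split => //; apply: subset_trans SC1 h1.
have cC : conn f C by split.
have J := Jc (leqnn _) xnz cC.
have R := rk_dep dC.
by exists C; split => //; lia.
Qed.

End CC.

Lemma CC_all (F : fieldType) (m : nat) (d : 'I_m -> nat) (I : finType)
  (x : I -> forall j : 'I_m, 'rV[F]_(d j)) (c : I -> F) a0 :
  (forall a j, x a j != 0) -> c a0 != 0 -> \sum_a c a *: ptensor (x a) = 0 ->
  exists S : {set I}, (\sum_(j < m) (rk (fun a => x a j) S - 1) + 2 <= #|S|)%N.
Proof.
move=> xnz ca0 csum.
have dC : dep x [set a | c a != 0].
  exists c; split.
  - by move=> a; rewrite inE.
  - rewrite -[RHS]csum big_mkcond /=; apply: eq_bigr => a _; rewrite inE.
    by case: eqP => // ->; rewrite scale0r.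
  - by apply/set0Pn; exists a0; rewrite inE.
have [S [_ HS]] := CC_ind xnz (leqnn _) dC.
by exists S.
Qed.


Lemma ptensor_ext (F : fieldType) (m : nat) (d : 'I_m -> nat)
  (z1 z2 : forall j : 'I_m, 'rV[F]_(d j)) : (forall j, z1 j = z2 j) -> ptensor z1 = ptensor z2.
Proof. by move=> e; apply/ffunP => i; rewrite !ffunE; apply: eq_bigr => j _; rewrite e. Qed.

Theorem corollary7p6 (F : fieldType) (m n : nat) (d : 'I_m -> nat)
  (x : 'I_n -> forall j : 'I_m, 'rV[F]_(d j)) :
  (2 <= n)%N -> (2 <= m)%N ->
  (forall a : 'I_n, ptensor (x a) != 0) ->
  (forall S : {set 'I_n}, (2 <= #|S|)%N ->
     (#|S| <= \sum_(j < m) (dimS x S j - 1))%N) ->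
  (forall t : tensor F d, is_product_tensor t ->
     (in_span (fun a => ptensor (x a)) t <->
      exists (a : 'I_n) (c : F), c != 0 /\ t = c *: ptensor (x a)))
  /\
  (forall a b : 'I_n, a != b ->
     forall c c' : F, c != 0 -> c' != 0 ->
       c *: ptensor (x a) != c' *: ptensor (x b)).
Proof.
move=> hn hm hx hS.
have xnz : forall a j, x a j != 0 by move=> a; apply: ptensor_nz_inv.
have hS' : forall S : {set 'I_n}, (2 <= #|S|)%N ->
    (#|S| <= \sum_(j < m) (rk (fun a => x a j) S - 1))%N by [].
have noS : forall S : {set 'I_n},
    ~ (\sum_(j < m) (rk (fun a => x a j) S - 1) + 2 <= #|S|)%N.
  move=> S H; have h2 : (2 <= #|S|)%N by lia.
  have := hS' S h2; lia.
split; last first.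
  move=> a b ab c c' c0 c'0; apply/eqP => E.
  suff [S HS] : exists S : {set 'I_n},
      (\sum_(j < m) (rk (fun a => x a j) S - 1) + 2 <= #|S|)%N by apply: noS HS.
  apply: (@CC_all F m d _ x (fun i => if i == a then c else if i == b then - c' else 0) a xnz).
    by rewrite eqxx.
  have ba : b != a by rewrite eq_sym.
  rewrite (bigD1 a) // (bigD1 b) /=; last by rewrite ba.
  rewrite eqxx (negbTE ba) eqxx big1 ?addr0.
    by rewrite E scaleNr subrr.
  by move=> i /andP [ia ib]; rewrite (negbTE ia) (negbTE ib) scale0r.
move=> t [tnz [z tz]]; split; last first.
  move=> [a [k [k0 ->]]]; exists (fun b => if b == a then k else 0).
  rewrite (bigD1 a) //= eqxx big1 ?addr0 // => b /negbTE ->.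
  by rewrite scale0r.
move=> [c tc].
case: (boolP [exists a, t \in <[ptensor (x a)]>%VS]) => [/existsP [a /vlineP [k tk]]|none].
  exists a, k; split => //; apply: contraNneq tnz => k0.
  by rewrite tk k0 scale0r.
exfalso.
have znz : forall j, z j != 0 by apply: ptensor_nz_inv; rewrite -tz.
pose X (i : 'I_n.+1) : forall j, 'rV[F]_(d j) := if unlift ord0 i is Some a then x a else z.
have Xnz : forall i j, X i j != 0.
  by move=> i j; rewrite /X; case: unlift => [a|]; [exact: xnz | exact: znz].
pose k (i : 'I_n.+1) : F := if unlift ord0 i is Some a then c a else -1.
have [S HS] : exists S : {set 'I_n.+1},
    (\sum_(j < m) (rk (fun i => X i j) S - 1) + 2 <= #|S|)%N.
  apply: (@CC_all F m d _ X k ord0 Xnz).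
    by rewrite /k unlift_none oppr_eq0 oner_eq0.
  rewrite big_ord_recl /k /X unlift_none.
  under eq_bigr do rewrite liftK.
  by rewrite -tc tz scaleN1r addNr.
pose S0 : {set 'I_n} := [set a : 'I_n | lift ord0 a \in S].
have rkle : forall j, (rk (fun a => x a j) S0 <= rk (fun i => X i j) S)%N.
  move=> j; apply: dimvS; apply: sp_subP => a; rewrite inE => aS.
  have -> : x a j = X (lift ord0 a) j by rewrite /X liftK.
  exact: (mem_sp (fun i => X i j) aS).
have cardS : #|S| = ((ord0 \in S) + #|S0|)%N.
  rewrite (cardsD1 ord0 S); congr (_ + _)%N.
  have -> : S :\ ord0 = lift ord0 @: S0.
    apply/setP => i; rewrite !inE; case: (unliftP ord0 i) => [a ->|->].
      by rewrite eq_sym neq_lift /= (mem_imset _ _ (@lift_inj _ ord0)) inE.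
    rewrite eqxx /=; apply/esym/negP => /imsetP [a _ e].
    by move: (neq_lift ord0 a); rewrite -e eqxx.
  by rewrite card_imset //; apply: lift_inj.
have sumle : (\sum_(j < m) (rk (fun a => x a j) S0 - 1)
              <= \sum_(j < m) (rk (fun i => X i j) S - 1))%N.
  by apply: leq_sum => j _; have := rkle j; lia.
case: (boolP (ord0 \in S)) => o0 in cardS *; simpl in cardS.
all: have hS0 := hS' S0; move: cardS HS sumle hS0.
all: set cS := #|S|; set c0 := #|S0|.
all: set s1 := (\sum_(j < m) (rk (fun i => X i j) S - 1))%N.
all: set s0 := (\sum_(j < m) (rk (fun a => x a j) S0 - 1))%N.
all: move=> cardS HS sumle hS0.
2: { have h0 : (2 <= c0)%N by lia.
      by have := hS0 h0; lia. }
case: (leqP 2 c0) => h0.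
  by have := hS0 h0; lia.
have c1 : #|S0| = 1%N by rewrite -/c0; lia.
have rk1 : forall j, (rk (fun i => X i j) S <= 1)%N.
  move=> j; have : (s1 = 0)%N by lia.
  rewrite /s1 (bigD1 j) //=; lia.
have [a S0a] : exists a, S0 = [set a] by apply/cards1P; rewrite c1.
have aS : lift ord0 a \in S.
  have : a \in S0 by rewrite S0a inE.
  by rewrite inE.
have zin : forall j, z j \in <[x a j]>%VS.
  move=> j.
  have xa : x a j \in sp (fun i => X i j) S.
    have -> : x a j = X (lift ord0 a) j by rewrite /X liftK.
    exact: (mem_sp (fun i => X i j) aS).
  have zS : z j \in sp (fun i => X i j) S.
    have -> : z j = X ord0 j by rewrite /X unlift_none.
    exact: (mem_sp (fun i => X i j) o0).
  have sub : (<[x a j]> <= sp (fun i => X i j) S)%VS by rewrite -memvE.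
  have [_ E] := dimv_leqif_eq sub.
  have : (<[x a j]>%VS == sp (fun i => X i j) S).
    rewrite -E dim_vline xnz; have := rk1 j; have := dimvS sub.
    by rewrite dim_vline xnz /rk; lia.
  by move/eqP ->.
have [lam Hl] : exists lam : 'I_m -> F, forall j, z j = lam j *: x a j.
  apply: (@fin_all_exists _ (fun _ => F) (fun j l => z j = l *: x a j)) => j.
  by apply/vlineP; apply: zin.
move/existsP: none; apply; exists a.
rewrite tz (ptensor_ext Hl) ptensor_scale; apply: memvZ; apply: memv_line.
Qed.
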